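(* Let $\chi:\mathrm{SO}_n\to\mathfrak{so}_n$ be smooth with $\chi(gAg^T)=g\chi(A)g^T$ for all $A,g\in\mathrm{SO}_n$. Then: (i) there exists a $2\pi$-periodic $\tau=(\tau_k)_{k=1}^p:\mathcal T\to\mathbb R^p$ with $\chi(A_\Theta)=\sum_{k=1}^p\tau_k(\Theta)F_{2k-1\,2k}$ for all $\Theta\in\mathcal T$, and $\tau\circ W=W\circ\tau$ for all $W\in\mathfrak W$; (ii) for every $A\in\mathrm{SO}_n$ and every $(g,\Theta)\in\mathrm{SO}_n\times\mathcal T$ with $A=gA_\Theta g^T$, $\chi(A)=\sum_{k=1}^p\tau_k(\Theta)\,gF_{2k-1\,2k}g^T$.
   Context: Let $n\ge3$, $\mathrm{SO}_n$ the rotation group, $\mathfrak{so}_n$ the skew-symmetric matrices; $F_{ij}\in\mathfrak{so}_n$ has entries $(F_{ij})_{k\ell}=\delta_{ik}\delta_{j\ell}-\delta_{i\ell}\delta_{jk}$. $p=\lfloor n/2\rfloor$; $\mathcal T=[-\pi,\pi)^p$ viewed as the torus. $R_\theta=\begin{pmatrix}\cos\theta&-\sin\theta\\\sin\theta&\cos\theta\end{pmatrix}$; for $\Theta=(\theta_1,\dots,\theta_p)$, $A_\Theta$ is block diagonal with blocks $R_{\theta_1},\dots,R_{\theta_p}$ (and a final entry $1$ if $n=2p+1$). The Weyl group $\mathfrak W$ acts linearly on $\mathbb R^p$: for $n=2p$ it is generated by coordinate transpositions $\theta_i\leftrightarrow\theta_j$ and sign changes of pairs $(\theta_i,\theta_j)\mapsto(-\theta_i,-\theta_j)$,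 $i<j$; for $n=2p+1$ by coordinate transpositions and single sign changes $\theta_i\mapsto-\theta_i$. *)

(* Defs.v *)
From HB Require Import structures.
From mathcomp Require Import all_boot all_order all_algebra.
From mathcomp Require Import all_classical all_reals all_analysis.
Set Implicit Arguments. Unset Strict Implicit. Unset Printing Implicit Defensive.
Import Order.TTheory GRing.Theory Num.Theory.
Import numFieldNormedType.Exports.
Local Open Scope classical_set_scope.
Local Open Scope ring_scope.

Section Defs.
Variable R : realType.

Definition SO (n : nat) : set 'M[R]_n :=
  [set A | A *m A^T = 1%:M /\ \det A = 1].

Definition so (n : nat) : set 'M[R]_n := [set A | A^T = - A].

(* F_{ij} with 0-based nat indices: (F i j) a b = [i=a][j=b] - [i=b][j=a] *)
Definition Fmx (n i j : nat) : 'M[R]_n :=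
  \matrix_(a < n, b < n)
    ((((i == a) && (j == b)) : nat)%:R - (((i == b) && (j == a)) : nat)%:R).

Definition coord_at (p : nat) (Th : 'rV[R]_p) (k : nat) : R :=
  if insub k is Some j then Th ord0 j else 0.

(* entry (r,c) of the rotation block R_theta, r,c in {0,1} given by parity *)
Definition rot_entry (t : R) (r c : bool) : R :=
  match r, c with
  | false, false => cos t
  | false, true => - sin t
  | true, false => sin t
  | true, true => cos t
  end.

(* A_Theta : block diagonal with blocks R_{theta_1},...,R_{theta_p}
   (and a final 1 if n = 2p+1); 0-based indices, block k occupies 2k, 2k+1 *)
Definition A_Theta (n : nat) (Th : 'rV[R]_(n./2)) : 'M[R]_n :=
  \matrix_(a < n, b < n)
    if (a./2 == b./2) && (a./2 < n./2)%N
    then rot_entry (coord_at Th a./2) (odd a) (odd b)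
    else ((a == b :> nat) : nat)%:R.

Definition torus (p : nat) : set 'rV[R]_p :=
  [set Th | forall k : 'I_p, - pi <= Th ord0 k < pi].

Definition transp (p : nat) (i j : 'I_p) (v : 'rV[R]_p) : 'rV[R]_p :=
  \row_l (if l == i then v ord0 j else if l == j then v ord0 i else v ord0 l).
Definition sign2 (p : nat) (i j : 'I_p) (v : 'rV[R]_p) : 'rV[R]_p :=
  \row_l (if (l == i) || (l == j) then - v ord0 l else v ord0 l).
Definition sign1 (p : nat) (i : 'I_p) (v : 'rV[R]_p) : 'rV[R]_p :=
  \row_l (if l == i then - v ord0 l else v ord0 l).

Inductive weyl_gen (n : nat) : ('rV[R]_(n./2) -> 'rV[R]_(n./2)) -> Prop :=
  | wg_transp (i j : 'I_(n./2)) : @weyl_gen n (transp i j)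
  | wg_sign2 (i j : 'I_(n./2)) : (i < j)%N -> ~~ odd n -> @weyl_gen n (sign2 i j)
  | wg_sign1 (i : 'I_(n./2)) : odd n -> @weyl_gen n (sign1 i).

(* the Weyl group: the group generated by the generators (all generators are
   involutions, so the generated monoid is the generated group) *)
Inductive weyl (n : nat) : ('rV[R]_(n./2) -> 'rV[R]_(n./2)) -> Prop :=
  | weyl_id : @weyl n id
  | weyl_comp g W : @weyl_gen n g -> @weyl n W -> @weyl n (g \o W).

Fixpoint Ck_on (k : nat) (m : nat) (U : set 'M[R]_m) (f : 'M[R]_m -> 'M[R]_m)
  : Prop :=
  match k with
  | 0 => {within U, continuous f}
  | k'.+1 => (forall x v, U x -> derivable f x v) /\
             (forall v, Ck_on k' U (fun x => 'D_v f x))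
  end.

Definition smooth_on (m : nat) (U : set 'M[R]_m) (f : 'M[R]_m -> 'M[R]_m) :=
  forall k, Ck_on k U f.

Definition smooth_SO (n : nat) (chi : 'M[R]_n -> 'M[R]_n) : Prop :=
  exists (U : set 'M[R]_n) (f : 'M[R]_n -> 'M[R]_n),
    [/\ open U, @SO n `<=` U, smooth_on U f & forall A, @SO n A -> f A = chi A].

End Defs.

(* Main.v *)
Require Import Defs.
From HB Require Import structures.
From mathcomp Require Import all_boot all_order all_algebra all_fingroup.
From mathcomp Require Import all_classical all_reals all_analysis.
From mathcomp Require Import zify ring lra.
Import Order.TTheory GRing.Theory Num.Theory.
Import numFieldNormedType.Exports.
Local Open Scope classical_set_scope.
Local Open Scope ring_scope.

Section S.
Variable R : realType.
Variable n : nat.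
Local Notation p := (n./2).

Lemma halfE (a : nat) : a = (odd a + (a./2).*2)%N.
Proof. by rewrite odd_double_half. Qed.

Lemma blk_lt (k : nat) (e : bool) : (k < p)%N -> (e + k.*2 < n)%N.
Proof. move=> h; rewrite [X in (_ < X)%N]halfE; move: (odd n) (n./2) h => o m h. case: o; case: e; lia. Qed.

Lemma same_blk (a b : nat) : a./2 = b./2 -> odd a = odd b -> a = b.
Proof. by move=> h1 h2; rewrite (halfE a) (halfE b) h1 h2. Qed.

Lemma half_bd (e : bool) k : ((e + k.*2)./2 = k)%N. Proof. exact: half_bit_double. Qed.
Lemma odd_bd (e : bool) k : odd (e + k.*2)%N = e. Proof. by case: e; rewrite /= ?odd_double. Qed.

Definition o2 (k : 'I_p) (e : bool) : 'I_n := Ordinal (@blk_lt _ e (ltn_ord k)).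

Lemma coord_add (T U : 'rV[R]_p) k : coord_at (T + U) k = coord_at T k + coord_at U k.
Proof. by rewrite /coord_at; case: insub => [j|]; rewrite ?mxE ?addr0. Qed.
Lemma coord_opp (T : 'rV[R]_p) k : coord_at (- T) k = - coord_at T k.
Proof. by rewrite /coord_at; case: insub => [j|]; rewrite ?mxE ?oppr0. Qed.

Lemma rot_add (x y : R) r c : rot_entry (x + y) r c =
  rot_entry x r false * rot_entry y false c + rot_entry x r true * rot_entry y true c.
Proof. by case: r; case: c; rewrite /= ?cosD ?sinD; ring. Qed.

Lemma rot_opp (x : R) r c : rot_entry (- x) r c = rot_entry x c r.
Proof. by case: r; case: c; rewrite /= ?cosN ?sinN ?opprK. Qed.

Lemma sum2 (f : 'I_n -> R) b1 b2 : b1 != b2 ->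
  (forall b, b != b1 -> b != b2 -> f b = 0) -> \sum_b f b = f b1 + f b2.
Proof.
move=> ne h; rewrite (bigD1 b1) //= (bigD1 b2) 1?eq_sym //= big1 ?addr0 //.
by move=> b /andP[h1 h2]; apply: h.
Qed.

Lemma sum1 (f : 'I_n -> R) b1 :
  (forall b, b != b1 -> f b = 0) -> \sum_b f b = f b1.
Proof.
move=> h; rewrite (bigD1 b1) //= big1 ?addr0 // => b h1; exact: h.
Qed.

Lemma AE (T : 'rV[R]_p) (a b : 'I_n) : A_Theta T a b =
  if (a./2 == b./2) && (a./2 < p)%N then rot_entry (coord_at T a./2) (odd a) (odd b)
  else ((a == b :> nat) : nat)%:R.
Proof. by rewrite mxE. Qed.

Lemma AE_out (T : 'rV[R]_p) (a b : 'I_n) : a./2 != b./2 -> A_Theta T a b = 0.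
Proof.
move=> h; rewrite AE (negbTE h) /=.
case: eqP => // e; by rewrite e eqxx in h.
Qed.

Lemma val_o2 (k : 'I_p) e : val (o2 k e) = (e + k.*2)%N. Proof. by []. Qed.

Lemma A_add (T U : 'rV[R]_p) : A_Theta T *m A_Theta U = A_Theta (T + U).
Proof.
apply/matrixP => a c; rewrite mxE.
have [hk|hk] := boolP (a./2 < p)%N.
  pose k : 'I_p := Ordinal hk.
  have ne : o2 k false != o2 k true by rewrite -val_eqE !val_o2; lia.
  rewrite (@sum2 _ (o2 k false) (o2 k true) ne); last first.
    move=> b h1 h2; rewrite (AE_out T) ?mul0r //.
    apply/eqP => e; move: h1 h2; rewrite -!val_eqE !val_o2 /=.
    case ob: (odd b); rewrite [X in X == _]halfE ob -e /k /=; lia.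
  rewrite !AE !val_o2 !half_bd !odd_bd eqxx hk /= coord_add rot_add.
  case: (eqVneq a./2 c./2) => hac.
    by [].
  have -> : (a == c :> nat) = false by apply/eqP => e; rewrite e eqxx in hac.
  have -> : (0 + a./2.*2 == c :> nat)%N = false.
    by apply/eqP => e; move: hac; rewrite -e (half_bd false) eqxx.
  have -> : (1 + a./2.*2 == c :> nat)%N = false.
    by apply/eqP => e; move: hac; rewrite -e (half_bd true) eqxx.
  by rewrite !mulr0 addr0.
rewrite (@sum1 _ a); last first.
  by move=> b hb; rewrite AE (negbTE hk) andbF /= val_eqE eq_sym (negbTE hb) mul0r.
rewrite !AE (negbTE hk) !andbF /= eqxx mul1r.
by [].
Qed.


Lemma A_tr (T : 'rV[R]_p) : (A_Theta T)^T = A_Theta (- T).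
Proof.
apply/matrixP => a b; rewrite mxE !AE coord_opp rot_opp.
case: (eqVneq a./2 b./2) => h.
  by rewrite h eq_sym.
by rewrite /= eq_sym.
Qed.

Lemma coord_ord (T : 'rV[R]_p) (k : 'I_p) : coord_at T k = T ord0 k.
Proof. by rewrite /coord_at valK. Qed.

Lemma same_blk_eq (a b : 'I_n) : a./2 = b./2 -> (a == b) = (odd a == odd b).
Proof.
move=> h; apply/idP/idP => [/eqP -> //|/eqP h2].
by apply/eqP/val_inj/same_blk.
Qed.

Lemma A_one (T : 'rV[R]_p) :
  (forall k : 'I_p, cos (T ord0 k) = 1 /\ sin (T ord0 k) = 0) -> A_Theta T = 1%:M.
Proof.
move=> hT; apply/matrixP => a b; rewrite AE [RHS]mxE.
case: ifP => [/andP[/eqP h hk]|_]; last by [].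
rewrite (coord_ord T (Ordinal hk)) (@same_blk_eq a b h).
have [hc hs] := hT (Ordinal hk).
by case: (odd a); case: (odd b); rewrite /= ?hc ?hs ?oppr0.
Qed.

Lemma A_zero : A_Theta (0 : 'rV[R]_p) = 1%:M.
Proof. by apply: A_one => k; rewrite mxE cos0 sin0. Qed.

Lemma A_SO (T : 'rV[R]_p) : SO (A_Theta T).
Proof.
have orth (U : 'rV[R]_p) : @A_Theta R n U *m (@A_Theta R n U)^T = 1%:M.
  by rewrite A_tr A_add subrr A_zero.
split; first exact: orth.
have d2 (U : 'rV[R]_p) : \det (@A_Theta R n U) ^+ 2 = 1.
  by rewrite expr2 -{2}det_tr -det_mulmx orth det1.
pose V := (2^-1 : R) *: T.
have -> : T = V + V.
  rewrite /V -scalerDl; have -> : (2^-1 + 2^-1 : R) = 1 by field. 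
  by rewrite scale1r.
rewrite -A_add det_mulmx.
have := d2 V; move: (\det (A_Theta V)) => x hx.
have h0 : 0 <= x * x by rewrite -expr2 sqr_ge0.
nra.
Qed.


Lemma A_period (T : 'rV[R]_p) (k : 'I_p) :
  A_Theta (T + (2 * pi) *: delta_mx ord0 k) = A_Theta T.
Proof.
have h1 : @A_Theta R n ((2 * pi) *: delta_mx ord0 k) = 1%:M.
  apply: A_one => l; rewrite !mxE.
  case: eqP => _; case: eqP => _ /=; rewrite ?mulr1 ?mulr0 ?cos0 ?sin0 //.
  by rewrite mulr_natl cos2pi sin2pi.
by rewrite -A_add h1 mulmx1.
Qed.

Lemma diag_conjE (d : 'rV[R]_n) (M : 'M[R]_n) a b :
  (diag_mx d *m M *m (diag_mx d)^T) a b = d 0 a * M a b * d 0 b.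
Proof. by rewrite tr_diag_mx mul_mx_diag mxE mul_diag_mx mxE. Qed.

Lemma diag_SO (d : 'rV[R]_n) : (forall a, d 0 a * d 0 a = 1) ->
  \prod_a d 0 a = 1 -> SO (diag_mx d).
Proof.
move=> h1 h2; split; last by rewrite det_diag.
apply/matrixP => a b; rewrite tr_diag_mx mul_mx_diag !mxE.
by case: eqVneq => [->|_]; rewrite ?mulr1n ?h1 ?mulr0n ?mul0r.
Qed.

Definition dflip (x y : 'I_n) : 'rV[R]_n :=
  \row_a (if (a == x) || (a == y) then -1 else 1).

Lemma dflip_sq x y a : dflip x y 0 a * dflip x y 0 a = 1.
Proof. by rewrite mxE; case: ifP; rewrite ?mulrNN mulr1. Qed.

Lemma dflip_SO x y : x != y -> SO (diag_mx (dflip x y)).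
Proof.
move=> ne; apply: diag_SO; first exact: dflip_sq.
rewrite (bigD1 x) // (bigD1 y) 1?eq_sym //= big1 => [|a /andP[h1 h2]].
  by rewrite !mxE !eqxx orbT /= mulr1 mulrNN mulr1.
by rewrite mxE (negbTE h1) (negbTE h2).
Qed.

Lemma conj_diag_A (d : 'rV[R]_n) (Fb : nat -> bool) (T : 'rV[R]_p) :
  (forall a, d 0 a * d 0 a = 1) ->
  (forall a b : 'I_n, a./2 = b./2 -> (a./2 < p)%N ->
     d 0 a * d 0 b = if (odd a != odd b) && Fb a./2 then -1 else 1) ->
  diag_mx d *m A_Theta T *m (diag_mx d)^T =
  A_Theta (\row_l (if Fb l then - T ord0 l else T ord0 l)).
Proof.
move=> h1 h2; apply/matrixP => a b; rewrite diag_conjE !AE.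
case: ifP => [/andP[/eqP h hk]|_].
  rewrite !(coord_ord _ (Ordinal hk)) mxE /= mulrAC (h2 a b h hk).
  by case: (Fb a./2); case: (odd a); case: (odd b); rewrite /= ?cosN ?sinN ?mulN1r ?mul1r ?opprK.
case: (eqVneq a b) => [->|ne]; first by rewrite eqxx mulr1 h1.
have -> : (a == b :> nat) = false by rewrite val_eqE (negbTE ne).
by rewrite mulr0 mul0r.
Qed.

Definition dblk (k : 'I_p) := dflip (o2 k false) (o2 k true).

Lemma o2_ne (k : 'I_p) : o2 k false != o2 k true.
Proof. by rewrite -val_eqE !val_o2; lia. Qed.

Lemma in_blk (k : 'I_p) (a : 'I_n) :
  ((a == o2 k false) || (a == o2 k true)) = (a./2 == k).
Proof.
rewrite -!val_eqE !val_o2; apply/idP/idP.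
  by case/orP => /eqP ->; rewrite half_bd.
move=> /eqP h; rewrite [X in X == _]halfE [X in _ || (X == _)]halfE h.
by case: (odd a); rewrite eqxx ?orbT.
Qed.

Lemma dblkE k a : dblk k 0 a = if a./2 == k then -1 else 1.
Proof. by rewrite mxE in_blk. Qed.

Lemma dblk_SO k : SO (diag_mx (dblk k)).
Proof. exact/dflip_SO/o2_ne. Qed.

Lemma dblk_A k (T : 'rV[R]_p) :
  diag_mx (dblk k) *m A_Theta T *m (diag_mx (dblk k))^T = A_Theta T.
Proof.
rewrite (@conj_diag_A _ (fun _ => false)); first last.
- by move=> a b h _; rewrite !dblkE h andbF; case: ifP; rewrite ?mulrNN mulr1.
- by move=> a; apply: dflip_sq.
by congr A_Theta; apply/rowP => l; rewrite mxE.
Qed.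


Lemma tperm_val (x y z : 'I_n) : val (tperm x y z) =
  if val z == val x then val y else if val z == val y then val x else val z.
Proof.
rewrite !val_eqE; case: tpermP => [->|->|/eqP/negbTE -> /eqP/negbTE ->].
- by rewrite eqxx.
- by case: eqP => [->|]; rewrite ?eqxx.
- by [].
Qed.

Ltac split_ifs := do 12 try (match goal with
 | |- context [if ?x == ?y then _ else _] =>
     lazymatch x with context [if _ then _ else _] => fail | _ =>
     case: (@eqP _ x y) => ? end
 end; rewrite /=).

Section Tr.
Variables i j : 'I_p.

Definition sP : {perm 'I_n} :=
  (tperm (o2 i false) (o2 j false) * tperm (o2 i true) (o2 j true))%g.

Definition sig (q : nat) : nat := if q == (i : nat) then (j : nat) else if q == (j : nat) then (i : nat) else q.

Lemma sP_val (a : 'I_n) : val (sP a) = (odd a + (sig a./2).*2)%N.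
Proof.
rewrite /sP permM !tperm_val !val_o2 /sig.
have := halfE a; rewrite -[\val a]/(nat_of_ord a); move: (odd a) (a./2) => e q ->.
move: (nat_of_ord i) (nat_of_ord j) => u v.
by case: e; split_ifs; lia.
Qed.

Lemma sP_half (a : 'I_n) : (sP a)./2 = sig a./2.
Proof. by rewrite sP_val half_bd. Qed.
Lemma sP_odd (a : 'I_n) : odd (sP a) = odd a.
Proof. by rewrite sP_val odd_bd. Qed.

Lemma sig_eq x y : (sig x == sig y) = (x == y).
Proof.
rewrite /sig; have := ltn_ord i; have := ltn_ord j.
move: (nat_of_ord i) (nat_of_ord j) => u v _ _.
by split_ifs; repeat (case: eqP => ?); try done; exfalso; lia.
Qed.

Lemma sig_lt x : (sig x < p)%N = (x < p)%N.
Proof.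
rewrite /sig; have := ltn_ord i; have := ltn_ord j.
move: (nat_of_ord i) (nat_of_ord j) => u v hu hv.
split_ifs; subst; rewrite ?hu ?hv //; apply/idP/idP; lia.
Qed.

Lemma coord_transp (T : 'rV[R]_p) (q : nat) : (q < p)%N ->
  coord_at (transp i j T) q = coord_at T (sig q).
Proof.
move=> hq; rewrite -[q]/(nat_of_ord (Ordinal hq)) coord_ord mxE /sig.
rewrite -!val_eqE /=.
case: eqP => [_|_]; first by rewrite coord_ord.
case: eqP => [_|_]; first by rewrite coord_ord.
by rewrite -[q]/(nat_of_ord (Ordinal hq)) coord_ord.
Qed.

Lemma perm_SO : SO (perm_mx sP : 'M[R]_n).
Proof.
split.
  by rewrite tr_perm_mx -perm_mxM mulgV perm_mx1.
rewrite det_perm /sP odd_permM !odd_tperm.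
have -> : (o2 i true != o2 j true) = (o2 i false != o2 j false).
  by rewrite -!val_eqE !val_o2 /=; apply/idP/idP => /eqP h; apply/eqP; lia.
by rewrite addbb expr0.
Qed.

Lemma perm_conjE (M : 'M[R]_n) a b :
  (perm_mx sP *m M *m (perm_mx sP)^T) a b = M (sP a) (sP b).
Proof. by rewrite tr_perm_mx -mulmxA -col_permE -row_permE !mxE. Qed.

Lemma perm_A (T : 'rV[R]_p) :
  perm_mx sP *m A_Theta T *m (perm_mx sP)^T = A_Theta (transp i j T).
Proof.
apply/matrixP => a b; rewrite perm_conjE !AE !sP_half !sP_odd sig_eq sig_lt.
case: ifP => [/andP[_ hk]|_]; first by rewrite coord_transp.
by rewrite !val_eqE (inj_eq perm_inj).
Qed.

End Tr.

Section Chi.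
Variable chi : 'M[R]_n -> 'M[R]_n.
Hypothesis chi_so : forall A, SO A -> so (chi A).
Hypothesis chi_equiv : forall A g, SO A -> SO g ->
      chi (g *m A *m g^T) = g *m chi A *m g^T.

Definition tau (T : 'rV[R]_p) : 'rV[R]_p :=
  \row_(k < p) chi (A_Theta T) (o2 k false) (o2 k true).

Lemma chi_skew T a b : chi (A_Theta T) a b = - chi (A_Theta T) b a.
Proof.
have := @chi_so _ (A_SO T); rewrite /so => /(congr1 (fun M : 'M[R]_n => M b a)).
by rewrite !mxE => ->.
Qed.

Lemma chi_diag0 T a : chi (A_Theta T) a a = 0.
Proof. have := chi_skew T a a; lra. Qed.

Lemma chi_key T k : chi (A_Theta T) =
  diag_mx (dblk k) *m chi (A_Theta T) *m (diag_mx (dblk k))^T.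
Proof. by rewrite -chi_equiv ?dblk_A //; [exact: A_SO | exact: dblk_SO]. Qed.

Lemma chi_zero T (a b : 'I_n) : ~~ ((a./2 == b./2) && (a./2 < p)%N) ->
  chi (A_Theta T) a b = 0.
Proof.
move=> h.
have [ha|ha] := boolP (a./2 < p)%N.
  have := congr1 (fun M : 'M[R]_n => M a b) (chi_key T (Ordinal ha)).
  rewrite diag_conjE !dblkE /= eqxx.
  have -> : (b./2 == a./2) = false.
    by apply/negbTE; move: h; rewrite ha andbT eq_sym.
  lra.
have [hb|hb] := boolP (b./2 < p)%N.
  have := congr1 (fun M : 'M[R]_n => M a b) (chi_key T (Ordinal hb)).
  rewrite diag_conjE !dblkE /= eqxx.
  have -> : (a./2 == b./2) = false.
    by apply/negbTE/eqP => e; rewrite e hb in ha.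
  lra.
have -> : a = b.
  apply: val_inj; rewrite /=; have := halfE a; have := halfE b; have := halfE n.
  have := ltn_ord a; have := ltn_ord b.
  move: ha hb; move: (odd a) (odd b) (odd n) (a./2) (b./2) => oa ob on qa qb.
  rewrite -!leqNgt; case: oa; case: ob; case: on; lia.
exact: chi_diag0.
Qed.

Lemma hb2 (e : bool) (k a : nat) : (e + k.*2 == a)%N -> a./2 = k.
Proof. by move/eqP <-; rewrite half_bd. Qed.

Lemma chi_sum T : chi (A_Theta T) =
  \sum_(k < p) tau T ord0 k *: Fmx R n (2 * k) (2 * k).+1.
Proof.
apply/matrixP => a b; rewrite summxE.
under eq_bigr do rewrite !mxE !mul2n.
have [/andP[/eqP h hk]|h] := boolP ((a./2 == b./2) && (a./2 < p)%N); last first.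
  rewrite chi_zero // big1 // => k _.
  have -> : ((k.*2 == a) && (k.*2.+1 == b))%N = false.
    apply/negbTE/negP => /andP[/(@hb2 false) e1 /(@hb2 true) e2].
    by move: h; rewrite e1 e2 eqxx ltn_ord.
  have -> : ((k.*2 == b) && (k.*2.+1 == a))%N = false.
    apply/negbTE/negP => /andP[/(@hb2 false) e1 /(@hb2 true) e2].
    by move: h; rewrite e1 e2 eqxx ltn_ord.
  by rewrite subrr mulr0.
rewrite (bigD1 (Ordinal hk)) //= big1 => [|k /negP hk']; last first.
  have -> : ((k.*2 == a) && (k.*2.+1 == b))%N = false.
    apply/negbTE/negP => /andP[/(@hb2 false) e1 _].
    by apply: hk'; apply/eqP/val_inj; rewrite /= e1.
  have -> : ((k.*2 == b) && (k.*2.+1 == a))%N = false.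
    apply/negbTE/negP => /andP[_ /(@hb2 true) e1].
    by apply: hk'; apply/eqP/val_inj; rewrite /= e1.
  by rewrite subrr mulr0.
rewrite addr0.
case: (eqVneq a b) => [<-|ne].
  by rewrite chi_diag0 subrr mulr0.
have hab : odd a != odd b.
  by apply: contra ne => /eqP e; apply/eqP/val_inj/same_blk.
have vk : val (Ordinal hk) = a./2 by [].
move: (Ordinal hk) vk => k vk.
have va : val a = (odd a + k.*2)%N by rewrite vk -halfE.
have vb : val b = (odd b + k.*2)%N by rewrite vk h -halfE.
have ea : o2 k (odd a) = a by apply/val_inj; rewrite val_o2 va.
have eb : o2 k (odd b) = b by apply/val_inj; rewrite val_o2 vb.
rewrite -!vk va vb.
move: hab ea eb; case: (odd a); case: (odd b) => // _ ea eb.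
  rewrite -[val k]/(k : nat) !eqxx /=.
  have -> : (k.*2 == (1 + k.*2))%N = false by lia.
  by rewrite /= sub0r mulrN1 -ea -eb chi_skew.
rewrite -[val k]/(k : nat) !eqxx /=.
have -> : (k.*2 == k.*2.+1)%N = false by lia.
by rewrite /= subr0 mulr1 -ea -eb.
Qed.


Lemma tau_period T k : tau (T + (2 * pi) *: delta_mx ord0 k) = tau T.
Proof. by rewrite /tau A_period. Qed.

Lemma no2 (k : 'I_p) e : (o2 k e : nat) = (e + k.*2)%N. Proof. by []. Qed.

Lemma tau_transp (i j : 'I_p) (T : 'rV[R]_p) : tau (transp i j T) = transp i j (tau T).
Proof.
apply/rowP => l; rewrite mxE -(perm_A i j) chi_equiv; [|exact: A_SO|exact: perm_SO].
rewrite perm_conjE.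
have hl : (sig i j l < p)%N by rewrite sig_lt.
pose l' := Ordinal hl.
have hE (e' : bool) : sP i j (o2 l e') = o2 l' e'.
  by apply/val_inj; rewrite sP_val /= odd_bd half_bd.
rewrite !hE.
have -> : l' = if l == i then j else if l == j then i else l.
  apply/val_inj; rewrite /= /sig -[(l : nat) == i]/(l == i) -[(l : nat) == j]/(l == j).
  by case: (l == i); case: (l == j).
rewrite [RHS]mxE.
by case: ifP => _; [|case: ifP => _]; rewrite mxE.
Qed.

Lemma tau_sign (d : 'rV[R]_n) (Fb : nat -> bool) (T : 'rV[R]_p) :
  SO (diag_mx d) -> (forall a, d 0 a * d 0 a = 1) ->
  (forall a : 'I_n, (a./2 < p)%N -> d 0 a = if odd a && Fb a./2 then -1 else 1) ->
  tau (\row_(l < p) (if Fb l then - T ord0 l else T ord0 l)) =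
  \row_(l < p) (if Fb l then - tau T ord0 l else tau T ord0 l).
Proof.
move=> hS hsq hd.
have hc : forall a b : 'I_n, a./2 = b./2 -> (a./2 < p)%N ->
     d 0 a * d 0 b = if (odd a != odd b) && Fb a./2 then -1 else 1.
  move=> a b h hk; rewrite !hd -?h //.
  by case: (odd a); case: (odd b); case: (Fb _); rewrite ?mulrNN ?mulr1 ?mul1r ?mulrN1.
apply/rowP => l; rewrite !mxE -(@conj_diag_A d Fb T hsq hc) chi_equiv //; last exact: A_SO.
rewrite diag_conjE mulrAC !hd ?no2 ?half_bd ?odd_bd ?ltn_ord //=.
by case: (Fb l); rewrite mul1r ?mulN1r ?mul1r.
Qed.

Lemma eq_o2 (a : 'I_n) k e : (a == o2 k e) = (odd a == e) && (a./2 == k).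
Proof.
apply/eqP/andP => [->|[/eqP h1 /eqP h2]]; first by rewrite no2 odd_bd half_bd.
by apply/val_inj/same_blk; rewrite val_o2 ?half_bd ?odd_bd.
Qed.

Lemma tau_sign2 (i j : 'I_p) (T : 'rV[R]_p) : (i < j)%N ->
  tau (sign2 i j T) = sign2 i j (tau T).
Proof.
move=> hij.
have ne : o2 i true != o2 j true by rewrite -val_eqE !val_o2 /=; lia.
pose Fb := fun q : nat => (q == i) || (q == j).
have e1 (U : 'rV[R]_p) : sign2 i j U =
    \row_(l < p) (if Fb l then - U ord0 l else U ord0 l).
  by apply/rowP => l; rewrite !mxE.
rewrite !e1; apply: (@tau_sign (dflip (o2 i true) (o2 j true)) Fb); first exact: dflip_SO.
  exact: dflip_sq.
by move=> a _; rewrite mxE !eq_o2 /Fb; case: (odd a).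
Qed.

Lemma tau_sign1 (i : 'I_p) (T : 'rV[R]_p) : odd n -> tau (sign1 i T) = sign1 i (tau T).
Proof.
move=> hn.
have hn0 : (n.-1 < n)%N by move: hn; case: (n).
pose y : 'I_n := Ordinal hn0.
have hnE := halfE n; rewrite hn in hnE.
have ne : o2 i true != y.
  rewrite -val_eqE val_o2 /=; have := ltn_ord i; lia.
pose Fb := fun q : nat => (q == i).
have e1 (U : 'rV[R]_p) : sign1 i U =
    \row_(l < p) (if Fb l then - U ord0 l else U ord0 l).
  by apply/rowP => l; rewrite !mxE.
rewrite !e1; apply: (@tau_sign (dflip (o2 i true) y) Fb); first exact: dflip_SO.
  exact: dflip_sq.
move=> a ha; rewrite mxE eq_o2.
have -> : (a == y) = false.
  apply/negbTE; rewrite -val_eqE /=; have := halfE a.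
  move: ha; move: (odd a) (a./2) => oa qa; case: oa; lia.
by rewrite orbF /Fb; case: (odd a).
Qed.

Lemma tau_weyl W : weyl W -> tau \o W = W \o tau.
Proof.
elim => [|g W0 hg hW IH]; first by [].
apply: boolp.funext => x /=.
have -> : W0 (tau x) = tau (W0 x) by have := congr1 (fun f => f x) IH.
move: (W0 x) => y {IH hW}.
case: hg => [i j|i j hij _|i ho].
- exact: tau_transp.
- exact: tau_sign2.
- exact: tau_sign1.
Qed.

End Chi.

End S.


Theorem proposition6p2 (R : realType) (n : nat) (hn : (3 <= n)%N)
  (chi : 'M[R]_n -> 'M[R]_n)
  (chi_so : forall A, @SO R n A -> @so R n (chi A))
  (chi_smooth : smooth_SO chi)
  (chi_equiv : forall A g, @SO R n A -> @SO R n g ->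
      chi (g *m A *m g^T) = g *m chi A *m g^T) :
  exists tau : 'rV[R]_(n./2) -> 'rV[R]_(n./2),
    [/\ (forall (Th : 'rV[R]_(n./2)) (k : 'I_(n./2)),
           tau (Th + (2 * pi) *: delta_mx ord0 k) = tau Th),
        (forall Th, @torus R (n./2) Th ->
           chi (@A_Theta R n Th) = \sum_(k < n./2) tau Th ord0 k *: Fmx R n (2 * k) (2 * k).+1),
        (forall W, @weyl R n W -> tau \o W = W \o tau) &
        (forall A g Th, @SO R n A -> @SO R n g -> @torus R (n./2) Th ->
           A = g *m @A_Theta R n Th *m g^T ->
           chi A = \sum_(k < n./2) tau Th ord0 k *: (g *m Fmx R n (2 * k) (2 * k).+1 *m g^T))].
Proof.
exists (tau R n chi); split.
- by move=> Th k; exact: (@tau_period R n chi Th k).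
- by move=> Th _; exact: (@chi_sum R n chi chi_so chi_equiv Th).
- by move=> W hW; exact: (@tau_weyl R n chi chi_equiv W hW).
move=> A g Th hA hg _ ->.
rewrite chi_equiv //; last exact: A_SO.
rewrite (@chi_sum R n chi chi_so chi_equiv Th) mulmx_sumr mulmx_suml.
by apply: eq_bigr => k _; rewrite -scalemxAr -scalemxAl.
Qed.
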